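(* Fix $T>0$ and a continuous function $h$ on $[0,T]$ with $h(t)>0$. Assume that for every boundary function $s$ on $[0,T]$ the Fixed Boundary Neumann Problem with flux $h$ has a (classical) solution $U^s$. Let $\mathcal{R}$ be the Neumann boundary-update operator $$\mathcal{R}(s)(t)=\int_0^t h(z)\,dz-\int_0^{s(t)}U^s(x,t)\,dx,\qquad 0\le t\le T.$$ If $s_1,s_2$ are boundary functions with $s_1(t)\le s_2(t)$ for all $t\in[0,T]$, then $\mathcal{R}(s_1)(t)\ge \mathcal{R}(s_2)(t)$ for all $t\in[0,T]$.
   Context: A boundary function on $[0,T]$ is a function $s\in C([0,T])\cap C^1((0,T])$ with $s(0)=0$ and $s(t)>0$ for $t\in(0,T]$. For such $s$ let $Q_{s,T}=\{(x,t):0<x<s(t),\,0<t<T\}$. The Fixed Boundary Neumann Problem on $s$ with flux $h$ asks for $U\in C(\overline{Q_{s,T}})\cap C^{2,1}(Q_{s,T})$ with $U_x$ continuous on $\overline{Q_{s,T}}\setminus\{t=0\}$ such that $U_t=U_{xx}$ in $Q_{s,T}$, $U(0,0)=0$, $U(s(t),t)=0$ for $t\in[0,T]$, and $-U_x(0,t)=h(t)$ for $t\in(0,T]$. Its solution is denoted $U^s$. (For such solutions, $\mathcal{R}(s)(t)$ coincides with $-\int_0^t U^s_x(s(z),z)\,dz$.) *)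

(* Defs.v *)
From Stdlib Require Import Reals.
From Coquelicot Require Import Coquelicot.
Open Scope R_scope.

Definition cont_within (D : R -> Prop) (f : R -> R) (x : R) : Prop :=
  filterlim f (within D (locally x)) (locally (f x)).

Definition cont2_within (D : R -> R -> Prop) (F : R -> R -> R) (x t : R) : Prop :=
  filterlim (fun p : R * R => F (fst p) (snd p))
    (within (fun p : R * R => D (fst p) (snd p)) (locally (x, t)))
    (locally (F x t)).

Definition has_deriv_within (D : R -> Prop) (f : R -> R) (x l : R) : Prop :=
  filterlim (fun y => (f y - f x) / (y - x))
    (within (fun y => D y /\ y <> x) (locally x)) (locally l).

Definition clI (T : R) (t : R) : Prop := 0 <= t <= T.
Definition ocI (T : R) (t : R) : Prop := 0 < t <= T.

Definition boundary_fun (T : R) (s : R -> R) : Prop :=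
  (forall t, clI T t -> cont_within (clI T) s t) /\
  (exists s' : R -> R,
      (forall t, ocI T t -> has_deriv_within (ocI T) s t (s' t)) /\
      (forall t, ocI T t -> cont_within (ocI T) s' t)) /\
  s 0 = 0 /\
  (forall t, ocI T t -> 0 < s t).

Definition Qst (T : R) (s : R -> R) (x t : R) : Prop :=
  0 < x < s t /\ 0 < t < T.
Definition Qst_bar (T : R) (s : R -> R) (x t : R) : Prop :=
  0 <= x <= s t /\ 0 <= t <= T.
Definition Qst_bar_pos (T : R) (s : R -> R) (x t : R) : Prop :=
  0 <= x <= s t /\ 0 < t <= T.

Definition Dx (U : R -> R -> R) (x t : R) : R := Derive (fun y => U y t) x.
Definition Dt (U : R -> R -> R) (x t : R) : R := Derive (fun tau => U x tau) t.

(* Classical solution of the Fixed Boundary Neumann Problem on s with flux h.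
   "U_x continuous on closure \ {t=0}" is read as: U_x (defined in Q) extends
   to a function Ux which is continuous on closure \ {t=0}; the Neumann
   condition refers to this extension. *)
Definition FBNP_sol (T : R) (s h : R -> R) (U : R -> R -> R) : Prop :=
  (forall x t, Qst_bar T s x t -> cont2_within (Qst_bar T s) U x t) /\
  (forall x t, Qst T s x t ->
     ex_derive (fun y => U y t) x /\
     ex_derive (fun y => Dx U y t) x /\
     ex_derive (fun tau => U x tau) t /\
     cont2_within (fun _ _ => True) (Dx U) x t /\
     cont2_within (fun _ _ => True) (Dx (Dx U)) x t /\
     cont2_within (fun _ _ => True) (Dt U) x t) /\
  (exists Ux : R -> R -> R,
     (forall x t, Qst T s x t -> Ux x t = Dx U x t) /\
     (forall x t, Qst_bar_pos T s x t -> cont2_within (Qst_bar_pos T s) Ux x t) /\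
     (forall t, ocI T t -> - Ux 0 t = h t)) /\
  (forall x t, Qst T s x t -> Dt U x t = Dx (Dx U) x t) /\
  U 0 0 = 0 /\
  (forall t, clI T t -> U (s t) t = 0).

(* Neumann boundary-update operator, for a choice Usol s = U^s of solutions *)
Definition Rop (h : R -> R) (Usol : (R -> R) -> R -> R -> R) (s : R -> R) (t : R) : R :=
  RInt h 0 t - RInt (fun x => Usol s x t) 0 (s t).

(* Main.v *)
Require Import Defs.
From Stdlib Require Import Reals Lra.
From Coquelicot Require Import Coquelicot.
Open Scope R_scope.

Definition ED (D : R -> R -> Prop) (F : R -> R -> R) (x t : R) : Prop :=
  forall eps, 0 < eps -> exists del, 0 < del /\ forall x' t', D x' t' ->
    Rabs (x' - x) < del -> Rabs (t' - t) < del -> Rabs (F x' t' - F x t) < eps.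

Lemma cont2_ED D F x t : cont2_within D F x t -> ED D F x t.
Proof.
  intros H eps He.
  destruct (proj1 (filterlim_locally _ _) H (mkposreal eps He)) as [d Hd].
  exists d; split; [apply cond_pos|].
  intros x' t' HD H1 H2.
  apply (Hd (x', t')); [split; assumption | exact HD].
Qed.

Lemma ED_cont2 D F x t : ED D F x t -> cont2_within D F x t.
Proof.
  intros H. apply filterlim_locally. intros eps.
  destruct (H eps (cond_pos eps)) as [d [Hd0 Hd]].
  exists (mkposreal d Hd0). intros [x' t'] [H1 H2] HD. apply Hd; assumption.
Qed.

Definition ED1 (D : R -> Prop) (f : R -> R) (x : R) : Prop :=
  forall eps, 0 < eps -> exists del, 0 < del /\ forall x', D x' ->
    Rabs (x' - x) < del -> Rabs (f x' - f x) < eps.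

Lemma cont_ED1 D f x : cont_within D f x -> ED1 D f x.
Proof.
  intros H eps He.
  destruct (proj1 (filterlim_locally _ _) H (mkposreal eps He)) as [d Hd].
  exists d; split; [apply cond_pos|].
  intros x' HD H1. apply (Hd x'); assumption.
Qed.
Lemma s_nonneg Tm s t : s 0 = 0 -> (forall t, ocI Tm t -> 0 < s t) -> clI Tm t -> 0 <= s t.
Proof.
  intros H0 Hp [Ht1 Ht2]. destruct (Rle_lt_or_eq_dec 0 t Ht1) as [h|h].
  - left; apply Hp; split; lra.
  - subst; lra.
Qed.

Lemma closure_lem Tm s V tau x :
  0 < tau <= Tm ->
  ED1 (clI Tm) s tau -> (forall t, ocI Tm t -> 0 < s t) -> s 0 = 0 ->
  ED (Qst_bar Tm s) V x tau ->
  0 <= x <= s tau ->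
  (forall x' t', Qst_bar Tm s x' t' -> t' < tau -> 0 <= V x' t') ->
  0 <= V x tau.
Proof.
  intros Htau Hs Hp H0 HV Hx Hlt.
  destruct (Rle_or_lt 0 (V x tau)) as [h|h]; [exact h|exfalso].
  destruct (HV (- V x tau)) as [d1 [Hd1 Hd1']]; [lra|].
  destruct (Hs d1 Hd1) as [d2 [Hd2 Hd2']].
  set (m := Rmin d1 d2).
  assert (Hm : 0 < m) by (unfold m; apply Rmin_pos; lra).
  assert (Hm1 : m <= d1) by apply Rmin_l.
  assert (Hm2 : m <= d2) by apply Rmin_r.
  set (t' := Rmax 0 (tau - m / 2)).
  assert (Ht'0 : 0 <= t') by apply Rmax_l.
  assert (Ht'1 : tau - m/2 <= t') by apply Rmax_r.
  assert (Ht'2 : t' < tau).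
  { unfold t', Rmax; destruct (Rle_dec 0 (tau - m/2)); lra. }
  assert (Hst : 0 < s tau) by (apply Hp; split; lra).
  assert (Hst' : 0 <= s t') by (apply (s_nonneg Tm); auto; split; lra).
  assert (Hds : Rabs (s t' - s tau) < d1).
  { apply Hd2'. unfold clI; split; lra.
    rewrite Rabs_left1; lra. }
  set (x' := x * s t' / s tau).
  assert (Hx'0 : 0 <= x').
  { unfold x', Rdiv. pose proof (Rinv_0_lt_compat _ Hst). apply Rmult_le_pos; [apply Rmult_le_pos|]; lra. }
  assert (Hx'1 : x' <= s t').
  { unfold x'. apply (Rmult_le_reg_r (s tau)); [lra|].
    replace (x * s t' / s tau * s tau) with (x * s t') by (field; lra). nra. }
  assert (Hxx : Rabs (x' - x) < d1).
  { replace (x' - x) with ((x / s tau) * (s t' - s tau)) by (unfold x'; field; lra).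
    rewrite Rabs_mult. rewrite (Rabs_right (x / s tau)).
    2:{ apply Rle_ge. apply Rmult_le_pos; [lra|]. left; apply Rinv_0_lt_compat; lra. }
    assert (x / s tau <= 1).
    { apply (Rmult_le_reg_r (s tau)); [lra|]. field_simplify; lra. }
    assert (0 <= x / s tau) by (apply Rmult_le_pos; [lra|]; left; apply Rinv_0_lt_compat; lra).
    pose proof (Rabs_pos (s t' - s tau)). nra. }
  assert (HQ : Qst_bar Tm s x' t') by (unfold Qst_bar; split; split; lra).
  specialize (Hd1' x' t' HQ Hxx).
  assert (Rabs (t' - tau) < d1) by (rewrite Rabs_left1; lra).
  specialize (Hd1' H).
  specialize (Hlt x' t' HQ Ht'2).
  apply Rabs_def2 in Hd1'. lra.
Qed.
From Stdlib Require Import ClassicalEpsilon.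

Lemma open_lem Tm s V tau :
  0 <= tau < Tm ->
  ED1 (clI Tm) s tau -> s 0 = 0 -> (forall t, ocI Tm t -> 0 < s t) ->
  (forall x, 0 <= x <= s tau -> ED (Qst_bar Tm s) V x tau) ->
  (forall x, 0 <= x <= s tau -> 0 < V x tau) ->
  exists d, 0 < d /\ forall x t, tau <= t <= Tm -> t < tau + d -> 0 <= x <= s t -> 0 < V x t.
Proof.
  intros Htau Hs H0 Hp HV Hpos.
  assert (Hst : 0 <= s tau) by (apply (s_nonneg Tm); auto; unfold clI; lra).
  assert (Hr : forall y, exists r : posreal, (0 <= y <= 1 -> forall y' t, 0 <= y' <= 1 ->
     tau <= t <= Tm -> Rabs (y' - y) < r -> Rabs (t - tau) < r -> 0 < V (y' * s t) t)).
  { intro y. destruct (Rle_dec 0 y) as [y0|y0]; [destruct (Rle_dec y 1) as [y1|y1]|].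
    2,3: exists (mkposreal 1 Rlt_0_1); intros; lra.
    assert (Hx : 0 <= y * s tau <= s tau) by (split; nra).
    pose proof (Hpos _ Hx) as Hv.
    destruct (HV _ Hx _ Hv) as [d1 [Hd1 Hd1']].
    destruct (Hs (d1/2)) as [d2 [Hd2 Hd2']]; [lra|].
    assert (Hq : 0 < d1 / (2 * (1 + s tau))).
    { apply Rdiv_lt_0_compat; lra. }
    assert (Hr0 : 0 < Rmin d2 (Rmin d1 (d1 / (2 * (1 + s tau))))).
    { apply Rmin_pos; [lra|]. apply Rmin_pos; lra. }
    exists (mkposreal _ Hr0). simpl. intros _ y' t Hy' Ht Hyy Htt.
    pose proof (Rmin_l d2 (Rmin d1 (d1 / (2 * (1 + s tau))))).
    pose proof (Rmin_r d2 (Rmin d1 (d1 / (2 * (1 + s tau))))).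
    pose proof (Rmin_l d1 (d1 / (2 * (1 + s tau)))).
    pose proof (Rmin_r d1 (d1 / (2 * (1 + s tau)))).
    assert (Hst' : 0 <= s t) by (apply (s_nonneg Tm); auto; unfold clI; lra).
    assert (HQ : Qst_bar Tm s (y' * s t) t) by (unfold Qst_bar; split; split; nra).
    assert (Hds : Rabs (s t - s tau) < d1 / 2).
    { apply Hd2'; [unfold clI; lra| lra]. }
    assert (Hq2 : d1 / (2 * (1 + s tau)) * s tau <= d1 / 2).
    { apply (Rmult_le_reg_r (2 * (1 + s tau))); [lra|].
      replace (d1 / (2 * (1 + s tau)) * s tau * (2 * (1 + s tau))) with (d1 * s tau) by (field; lra).
      replace (d1 / 2 * (2 * (1 + s tau))) with (d1 * (1 + s tau)) by field. nra. }
    assert (Hxx : Rabs (y' * s t - y * s tau) < d1).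
    { replace (y' * s t - y * s tau) with (y' * (s t - s tau) + (y' - y) * s tau) by ring.
      eapply Rle_lt_trans; [apply Rabs_triang|].
      rewrite !Rabs_mult. rewrite (Rabs_right (s tau)) by lra.
      rewrite (Rabs_right y') by lra.
      pose proof (Rabs_pos (s t - s tau)). pose proof (Rabs_pos (y' - y)).
      assert (Rabs (y' - y) * s tau <= d1 / (2 * (1 + s tau)) * s tau) by nra.
      nra. }
    specialize (Hd1' _ _ HQ Hxx ltac:(lra)).
    apply Rabs_def2 in Hd1'. lra. }
  set (delta := fun y => proj1_sig (constructive_indefinite_description _ (Hr y))).
  assert (Hdelta : forall y, 0 <= y <= 1 -> forall y' t, 0 <= y' <= 1 ->
     tau <= t <= Tm -> Rabs (y' - y) < delta y -> Rabs (t - tau) < delta y -> 0 < V (y' * s t) t).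
  { intro y. unfold delta. destruct (constructive_indefinite_description _ (Hr y)) as [r Hr']. exact Hr'. }
  destruct (compactness_value_1d 0 1 delta) as [d Hd].
  exists d. split; [apply cond_pos|].
  intros x t Ht Htd Hx.
  assert (Hst' : 0 <= s t) by (apply (s_nonneg Tm); auto; unfold clI; lra).
  set (y' := if Req_EM_T (s t) 0 then 0 else x / s t).
  assert (Hy'1 : y' * s t = x).
  { unfold y'. destruct (Req_EM_T (s t) 0) as [e|e]. rewrite e in Hx |- *; lra. field; auto. }
  assert (Hy'2 : 0 <= y' <= 1).
  { unfold y'. destruct (Req_EM_T (s t) 0) as [e|e]. lra.
    split. apply Rmult_le_pos; [lra|]. left; apply Rinv_0_lt_compat; lra.
    apply (Rmult_le_reg_r (s t)); [lra|]. replace (x / s t * s t) with x by (field; auto). lra. }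
  destruct (Rlt_or_le 0 (V x t)) as [ok|bad]; [exact ok|exfalso].
  apply (Hd y' Hy'2). intros [y [Hy [H1 H2]]].
  assert (Rabs (t - tau) < delta y) by (rewrite Rabs_right; lra).
  pose proof (Hdelta y Hy y' t Hy'2 Ht H1 H). rewrite Hy'1 in H3. lra.
Qed.
Lemma left_deriv f a l : is_derive f a l ->
  (exists d, 0 < d /\ forall h, 0 < h < d -> f a <= f (a - h)) -> l <= 0.
Proof.
  intros Hd [d [Hd0 Hd1]].
  apply is_derive_Reals in Hd.
  destruct (Rle_or_lt l 0) as [ok|bad]; [exact ok|exfalso].
  destruct (Hd (l/2)) as [e He]; [lra|].
  set (h := Rmin d e / 2).
  assert (0 < Rmin d e) by (apply Rmin_pos; [lra|apply cond_pos]).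
  pose proof (Rmin_l d e). pose proof (Rmin_r d e).
  assert (Hh : 0 < h < d) by (unfold h; lra).
  specialize (He (- h) ltac:(lra) ltac:(rewrite Rabs_left; unfold h in *; lra)).
  specialize (Hd1 h Hh).
  replace (a + - h) with (a - h) in He by ring.
  apply Rabs_def2 in He. destruct He as [He1 He2].
  assert ((f (a - h) - f a) / - h <= 0).
  { unfold Rdiv. rewrite <- Ropp_inv_permute by lra.
    pose proof (Rinv_0_lt_compat h ltac:(lra)). nra. }
  lra.
Qed.

Lemma right_deriv f a l : is_derive f a l ->
  (exists d, 0 < d /\ forall h, 0 < h < d -> f a <= f (a + h)) -> 0 <= l.
Proof.
  intros Hd [d [Hd0 Hd1]].
  apply is_derive_Reals in Hd.
  destruct (Rle_or_lt 0 l) as [ok|bad]; [exact ok|exfalso].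
  destruct (Hd (-l/2)) as [e He]; [lra|].
  set (h := Rmin d e / 2).
  assert (0 < Rmin d e) by (apply Rmin_pos; [lra|apply cond_pos]).
  pose proof (Rmin_l d e). pose proof (Rmin_r d e).
  assert (Hh : 0 < h < d) by (unfold h; lra).
  specialize (He h ltac:(lra) ltac:(rewrite Rabs_right; unfold h in *; lra)).
  specialize (Hd1 h Hh).
  apply Rabs_def2 in He. destruct He as [He1 He2].
  assert (0 <= (f (a + h) - f a) / h).
  { unfold Rdiv. pose proof (Rinv_0_lt_compat h ltac:(lra)). nra. }
  lra.
Qed.

Lemma min2 (f g : R -> R) a b x0 L : a < x0 < b ->
  (forall x, a < x < b -> is_derive f x (g x)) -> is_derive g x0 L ->
  (forall x, a < x < b -> f x0 <= f x) -> 0 <= L.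
Proof.
  intros Hx Hf Hg Hmin.
  assert (Hg0 : g x0 = 0).
  { apply Rle_antisym.
    - apply (left_deriv f x0); [apply Hf; lra|]. exists (x0 - a); split; [lra|].
      intros h Hh. apply Hmin; lra.
    - apply (right_deriv f x0); [apply Hf; lra|]. exists (b - x0); split; [lra|].
      intros h Hh. apply Hmin; lra. }
  destruct (Rle_or_lt 0 L) as [ok|bad]; [exact ok|exfalso].
  apply is_derive_Reals in Hg.
  destruct (Hg (-L/2)) as [e He]; [lra|].
  set (h := Rmin (b - x0) e / 2).
  assert (0 < Rmin (b - x0) e) by (apply Rmin_pos; [lra|apply cond_pos]).
  pose proof (Rmin_l (b - x0) e). pose proof (Rmin_r (b - x0) e).
  assert (Hh : 0 < h) by (unfold h; lra).
  assert (Hneg : forall c, x0 < c <= x0 + h -> g c < 0).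
  { intros c Hc. specialize (He (c - x0) ltac:(lra) ltac:(rewrite Rabs_right; unfold h in Hc; lra)).
    replace (x0 + (c - x0)) with c in He by ring. rewrite Hg0 in He.
    apply Rabs_def2 in He. destruct He as [He1 He2].
    assert (g c / (c - x0) < 0) by lra.
    destruct (Rlt_or_le (g c) 0) as [ok|bad2]; [exact ok|exfalso].
    assert (0 <= g c / (c - x0)).
    { unfold Rdiv. pose proof (Rinv_0_lt_compat (c - x0) ltac:(lra)). nra. }
    lra. }
  destruct (MVT_cor2 f g x0 (x0 + h)) as [c [Hc1 Hc2]]; [lra| |].
  { intros c Hc. apply is_derive_Reals. apply Hf. unfold h in Hc; lra. }
  specialize (Hneg c ltac:(lra)).
  specialize (Hmin (x0 + h) ltac:(unfold h; lra)).
  replace (x0 + h - x0) with h in Hc1 by ring. nra.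
Qed.

Lemma neum1 (f g : R -> R) b : 0 < b ->
  (forall x, 0 <= x <= b -> continuity_pt f x) ->
  (forall x, 0 < x < b -> is_derive f x (g x)) ->
  (forall x, 0 <= x <= b -> g x < 0) -> f b < f 0.
Proof.
  intros Hb Hc Hd Hg.
  destruct (MVT_gen f 0 b g) as [c [Hc1 Hc2]].
  - rewrite Rmin_left, Rmax_right by lra. exact Hd.
  - rewrite Rmin_left, Rmax_right by lra. exact Hc.
  - rewrite Rmin_left, Rmax_right in Hc1 by lra.
    specialize (Hg c Hc1). nra.
Qed.
Definition clamp (b z : R) : R := Rmax 0 (Rmin b z).

Lemma clamp_facts b z : 0 <= b -> 0 <= clamp b z <= b.
Proof. intros Hb. unfold clamp, Rmax, Rmin. repeat destruct Rle_dec; lra. Qed.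

Lemma clamp_lip b z z' : 0 <= b -> Rabs (clamp b z' - clamp b z) <= Rabs (z' - z).
Proof. intros Hb. unfold clamp, Rmax, Rmin. repeat destruct Rle_dec; split_Rabs; lra. Qed.

Lemma clamp_id b z : 0 <= z <= b -> clamp b z = z.
Proof. intros Hb. unfold clamp, Rmax, Rmin. repeat destruct Rle_dec; lra. Qed.

Lemma slice_cont Tm s V tau z : 0 <= tau <= Tm -> 0 <= s tau ->
  (forall x, 0 <= x <= s tau -> ED (Qst_bar Tm s) V x tau) ->
  continuity_pt (fun z => V (clamp (s tau) z) tau) z.
Proof.
  intros Ht Hs HV. apply continuity_pt_filterlim. apply filterlim_locally.
  intros eps. destruct (HV (clamp (s tau) z) (clamp_facts _ _ Hs) eps (cond_pos eps)) as [d [Hd Hd']].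
  exists (mkposreal d Hd). intros y Hy.
  change (Rabs (V (clamp (s tau) y) tau - V (clamp (s tau) z) tau) < eps).
  apply Hd'.
  - pose proof (clamp_facts _ y Hs). unfold Qst_bar; split; lra.
  - eapply Rle_lt_trans; [apply clamp_lip; exact Hs|]. exact Hy.
  - rewrite Rminus_diag, Rabs_R0; exact Hd.
Qed.
From Stdlib Require Import Classical.

Definition Qint (Tm : R) (s : R -> R) (x t : R) : Prop := 0 < x < s t /\ 0 < t <= Tm.

Lemma strict_max Tm s V E :
  0 < Tm ->
  (forall t, clI Tm t -> ED1 (clI Tm) s t) -> s 0 = 0 -> (forall t, ocI Tm t -> 0 < s t) ->
  (forall x t, Qst_bar Tm s x t -> ED (Qst_bar Tm s) V x t) ->
  (forall x t, Qint Tm s x t -> ex_derive (fun y => V y t) x /\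
     ex_derive (fun y => Defs.Dx V y t) x /\ ex_derive (fun tau => V x tau) t /\
     Defs.Dx (Defs.Dx V) x t < Defs.Dt V x t) ->
  (forall x t, Qint Tm s x t -> E x t = Defs.Dx V x t) ->
  (forall x t, Qst_bar_pos Tm s x t -> ED (Qst_bar_pos Tm s) E x t) ->
  (forall t, ocI Tm t -> E 0 t < 0) ->
  (forall t, clI Tm t -> 0 < V (s t) t) ->
  forall x t, Qst_bar Tm s x t -> 0 < V x t.
Proof.
  intros HTm Hs Hs0 Hsp HV Hint HE HEc HEn Hb.
  set (S := fun t => 0 <= t <= Tm /\ forall t' x, 0 <= t' <= t -> 0 <= x <= s t' -> 0 < V x t').
  assert (HS0 : S 0).
  { split; [lra|]. intros t' x Ht' Hx. assert (t' = 0) by lra. subst t'.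
    rewrite Hs0 in Hx. assert (x = 0) by lra. subst x.
    replace (V 0 0) with (V (s 0) 0) by (rewrite Hs0; reflexivity).
    apply Hb. unfold clI; lra. }
  destruct (completeness S) as [tau [Hub Hlub]].
  { exists Tm. intros u Su. apply Su. }
  { exists 0; exact HS0. }
  assert (Ht0 : 0 <= tau) by (apply Hub; exact HS0).
  assert (Ht1 : tau <= Tm) by (apply Hlub; intros u Su; apply Su).
  assert (Hbelow : forall t' x, 0 <= t' < tau -> 0 <= x <= s t' -> 0 < V x t').
  { intros t' x Ht' Hx.
    destruct (classic (exists u, S u /\ t' < u)) as [[u [Su Hu]]|Hn].
    - apply (proj2 Su t'); [lra|exact Hx].
    - exfalso. assert (tau <= t'); [|lra]. apply Hlub. intros u Su.
      destruct (Rle_or_lt u t') as [h|h]; [exact h|]. exfalso; apply Hn; eauto. }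
  assert (Hst : 0 <= s tau) by (apply (s_nonneg Tm); auto; unfold clI; lra).
  assert (Hslice : forall x, 0 <= x <= s tau -> 0 < V x tau).
  { intros x0 Hx0. destruct (Rlt_or_le 0 (V x0 tau)) as [ok|bad]; [exact ok|exfalso].
    destruct (Rle_lt_or_eq_dec 0 tau Ht0) as [tpos|t0].
    2:{ rewrite <- t0 in *. rewrite Hs0 in Hx0. assert (x0 = 0) by lra. subst x0.
        specialize (Hb 0 ltac:(unfold clI; lra)). rewrite Hs0 in Hb. lra. }
    assert (Hge : forall x, 0 <= x <= s tau -> 0 <= V x tau).
    { intros x Hx. apply (closure_lem Tm s V tau x); auto.
      - apply Hs. unfold clI; lra.
      - apply HV. unfold Qst_bar; split; lra.
      - intros x' t' HQ Hlt. left. apply Hbelow; [|apply HQ]. split; [apply HQ|exact Hlt]. }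
    assert (HV0 : V x0 tau = 0) by (specialize (Hge x0 Hx0); lra).
    assert (Hstp : 0 < s tau) by (apply Hsp; unfold ocI; lra).
    destruct (Rle_lt_or_eq_dec x0 (s tau) (proj2 Hx0)) as [xlt|xeq].
    2:{ subst x0. specialize (Hb tau ltac:(unfold clI; lra)). lra. }
    destruct (Rle_lt_or_eq_dec 0 x0 (proj1 Hx0)) as [xpos|xz].
    2:{
      subst x0.
      assert (HQp : Qst_bar_pos Tm s 0 tau) by (unfold Qst_bar_pos; split; lra).
      assert (HE0 := HEn tau ltac:(unfold ocI; lra)).
      destruct (HEc 0 tau HQp (- E 0 tau)) as [d [Hd Hd']]; [lra|].
      set (b := Rmin d (s tau) / 2).
      assert (0 < Rmin d (s tau)) by (apply Rmin_pos; lra).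
      pose proof (Rmin_l d (s tau)). pose proof (Rmin_r d (s tau)).
      assert (Hbp : 0 < b) by (unfold b; lra).
      assert (Hbs : b < s tau) by (unfold b; lra).
      pose proof (neum1 (fun z => V (clamp (s tau) z) tau) (fun z => E z tau) b Hbp) as N.
      simpl in N.
      rewrite (clamp_id (s tau) b), (clamp_id (s tau) 0) in N by lra.
      assert (V b tau < V 0 tau); [|specialize (Hge b ltac:(lra)); lra].
      apply N.
      - intros z Hz. apply (slice_cont Tm); [lra|lra|].
        intros x Hx. apply HV. unfold Qst_bar; split; lra.
      - intros z Hz.
        assert (HQi : Qint Tm s z tau) by (unfold Qint; split; lra).
        rewrite (HE z tau HQi). unfold Defs.Dx.
        apply (is_derive_ext_loc (fun y => V y tau)).
        + assert (Hm : 0 < Rmin z (s tau - z)) by (apply Rmin_pos; lra).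
          exists (mkposreal _ Hm). intros y Hy. change (Rabs (y - z) < Rmin z (s tau - z)) in Hy.
          pose proof (Rmin_l z (s tau - z)). pose proof (Rmin_r z (s tau - z)).
          rewrite clamp_id; [reflexivity|]. split_Rabs; lra.
        + apply Derive_correct. apply (Hint z tau HQi).
      - intros z Hz. unfold b in Hz.
        assert (HQ : Qst_bar_pos Tm s z tau) by (unfold Qst_bar_pos; split; lra).
        specialize (Hd' z tau HQ ltac:(rewrite Rminus_0_r, Rabs_right; lra)
                          ltac:(rewrite Rminus_diag, Rabs_R0; lra)).
        apply Rabs_def2 in Hd'. lra. }
    assert (HQi : Qint Tm s x0 tau) by (unfold Qint; split; lra).
    destruct (Hint x0 tau HQi) as [Hex1 [Hex2 [Hex3 Hlt]]].
    assert (Hdt : Defs.Dt V x0 tau <= 0).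
    { apply (left_deriv (fun u => V x0 u) tau); unfold Defs.Dt; [apply Derive_correct; exact Hex3|].
      destruct (Hs tau ltac:(unfold clI; lra) (s tau - x0)) as [d2 [Hd2 Hd2']]; [lra|].
      exists (Rmin d2 tau). split; [apply Rmin_pos; lra|].
      intros h Hh. pose proof (Rmin_l d2 tau). pose proof (Rmin_r d2 tau).
      rewrite HV0. left. apply Hbelow; [lra|].
      specialize (Hd2' (tau - h) ltac:(unfold clI; lra) ltac:(rewrite Rabs_left; lra)).
      apply Rabs_def2 in Hd2'. lra. }
    assert (Hdxx : 0 <= Defs.Dx (Defs.Dx V) x0 tau).
    { apply (min2 (fun y => V y tau) (fun y => Defs.Dx V y tau) 0 (s tau) x0); [lra| | |].
      - intros x Hx. unfold Defs.Dx. apply Derive_correct. apply (Hint x tau). unfold Qint; split; lra.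
      - unfold Defs.Dx at 1. apply Derive_correct. exact Hex2.
      - intros x Hx. rewrite HV0. apply Hge. lra. }
    lra. }
  assert (HSt : S tau).
  { split; [lra|]. intros t' x Ht' Hx. destruct (Rlt_or_le t' tau) as [h|h].
    - apply Hbelow; [lra|exact Hx].
    - assert (t' = tau) by lra. subst t'. apply Hslice; exact Hx. }
  destruct (Rlt_or_le tau Tm) as [lt|ge].
  - exfalso.
    destruct (open_lem Tm s V tau) as [d [Hd Hd']]; auto.
    + apply Hs. unfold clI; lra.
    + intros x Hx. apply HV. unfold Qst_bar; split; lra.
    + pose proof (Rmin_l Tm (tau + d/2)). pose proof (Rmin_r Tm (tau + d/2)).
      assert (tau < Rmin Tm (tau + d / 2)) by (unfold Rmin; destruct Rle_dec; lra).
      set (t1 := Rmin Tm (tau + d / 2)) in *.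
      assert (HS1 : S t1).
      { split; [lra|]. intros t' x Ht' Hx. destruct (Rle_or_lt t' tau) as [h|h].
        - apply (proj2 HSt t'); [lra|exact Hx].
        - apply Hd'; [lra|lra|exact Hx]. }
      specialize (Hub t1 HS1). lra.
  - intros x t [Hx Ht]. apply (proj2 HSt t); [lra|exact Hx].
Qed.
Lemma ED_sub (D D' : R -> R -> Prop) F x t : (forall x t, D' x t -> D x t) -> ED D F x t -> ED D' F x t.
Proof. intros Hs H eps He. destruct (H eps He) as [d [Hd H']]. exists d; split; auto. Qed.

Lemma ED1_sub (D D' : R -> Prop) f x : (forall x, D' x -> D x) -> ED1 D f x -> ED1 D' f x.
Proof. intros Hs H eps He. destruct (H eps He) as [d [Hd H']]. exists d; split; auto. Qed.

Lemma ED_plus D F G x t : ED D F x t -> ED D G x t -> ED D (fun x t => F x t + G x t) x t.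
Proof.
  intros HF HG eps He.
  destruct (HF (eps/2)) as [d1 [Hd1 H1]]; [lra|].
  destruct (HG (eps/2)) as [d2 [Hd2 H2]]; [lra|].
  exists (Rmin d1 d2). split; [apply Rmin_pos; lra|].
  intros x' t' HD Hx Ht. pose proof (Rmin_l d1 d2). pose proof (Rmin_r d1 d2).
  specialize (H1 x' t' HD ltac:(lra) ltac:(lra)). specialize (H2 x' t' HD ltac:(lra) ltac:(lra)).
  replace (F x' t' + G x' t' - (F x t + G x t)) with ((F x' t' - F x t) + (G x' t' - G x t)) by ring.
  eapply Rle_lt_trans; [apply Rabs_triang|]. lra.
Qed.

Lemma ED_minus D F G x t : ED D F x t -> ED D G x t -> ED D (fun x t => F x t - G x t) x t.
Proof.
  intros HF HG eps He.
  destruct (HF (eps/2)) as [d1 [Hd1 H1]]; [lra|].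
  destruct (HG (eps/2)) as [d2 [Hd2 H2]]; [lra|].
  exists (Rmin d1 d2). split; [apply Rmin_pos; lra|].
  intros x' t' HD Hx Ht. pose proof (Rmin_l d1 d2). pose proof (Rmin_r d1 d2).
  specialize (H1 x' t' HD ltac:(lra) ltac:(lra)). specialize (H2 x' t' HD ltac:(lra) ltac:(lra)).
  replace (F x' t' - G x' t' - (F x t - G x t)) with ((F x' t' - F x t) + - (G x' t' - G x t)) by ring.
  eapply Rle_lt_trans; [apply Rabs_triang|]. rewrite Rabs_Ropp. lra.
Qed.

Lemma ED_psi D a b x t : ED D (fun x t => a * t + b * exp (- x)) x t.
Proof.
  intros eps He.
  pose proof (derivable_continuous_pt _ _ (derivable_pt_exp (- x))) as Hc.
  destruct (Hc (eps / (2 * (1 + Rabs b)))) as [al [Hal Hal']].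
  { apply Rdiv_lt_0_compat; [lra|]. pose proof (Rabs_pos b). lra. }
  exists (Rmin al (eps / (2 * (1 + Rabs a)))). split.
  { apply Rmin_pos; [lra|]. apply Rdiv_lt_0_compat; [lra|]. pose proof (Rabs_pos a). lra. }
  intros x' t' _ Hx Ht.
  pose proof (Rmin_l al (eps / (2 * (1 + Rabs a)))). pose proof (Rmin_r al (eps / (2 * (1 + Rabs a)))).
  assert (He1 : Rabs (exp (- x') - exp (- x)) <= eps / (2 * (1 + Rabs b))).
  { destruct (Req_dec x' x) as [e|e]. subst; rewrite Rminus_diag, Rabs_R0.
    left; apply Rdiv_lt_0_compat; [lra|]. pose proof (Rabs_pos b). lra.
    left. apply (Hal' (- x')). split. split; [exact I|]. intro h; apply e; lra.
    simpl. unfold R_dist. replace (- x' - - x) with (- (x' - x)) by ring. rewrite Rabs_Ropp. lra. }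
  replace (a * t' + b * exp (- x') - (a * t + b * exp (- x))) with (a * (t' - t) + b * (exp (- x') - exp (- x))) by ring.
  eapply Rle_lt_trans; [apply Rabs_triang|]. rewrite !Rabs_mult.
  pose proof (Rabs_pos a). pose proof (Rabs_pos b). pose proof (Rabs_pos (t' - t)).
  pose proof (Rabs_pos (exp (- x') - exp (- x))).
  assert (Rabs a * Rabs (t' - t) <= eps / 2).
  { assert (Rabs (t' - t) <= eps / (2 * (1 + Rabs a))) by lra.
    apply Rle_trans with (Rabs a * (eps / (2 * (1 + Rabs a)))); [nra|].
    apply (Rmult_le_reg_r (2 * (1 + Rabs a))); [lra|].
    replace (Rabs a * (eps / (2 * (1 + Rabs a))) * (2 * (1 + Rabs a))) with (Rabs a * eps) by (field; lra).
    nra. }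
  assert (Rabs b * Rabs (exp (- x') - exp (- x)) < eps / 2).
  { apply Rle_lt_trans with (Rabs b * (eps / (2 * (1 + Rabs b)))); [nra|].
    apply (Rmult_lt_reg_r (2 * (1 + Rabs b))); [lra|].
    replace (Rabs b * (eps / (2 * (1 + Rabs b))) * (2 * (1 + Rabs b))) with (Rabs b * eps) by (field; lra).
    nra. }
  lra.
Qed.
Lemma Qst_loc T s x t : Qst T s x t -> locally x (fun y => Qst T s y t).
Proof.
  intros [Hx Ht]. assert (Hm : 0 < Rmin x (s t - x)) by (apply Rmin_pos; lra).
  exists (mkposreal _ Hm). intros y Hy. change (Rabs (y - x) < Rmin x (s t - x)) in Hy.
  pose proof (Rmin_l x (s t - x)). pose proof (Rmin_r x (s t - x)).
  split; [split_Rabs; lra | exact Ht].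
Qed.

Lemma weak_max T s W E :
  0 < T ->
  (forall t, clI T t -> cont_within (clI T) s t) -> s 0 = 0 -> (forall t, ocI T t -> 0 < s t) ->
  (forall x t, Qst_bar T s x t -> ED (Qst_bar T s) W x t) ->
  (forall x t, Qst T s x t -> ex_derive (fun y => W y t) x /\
     ex_derive (fun y => Defs.Dx W y t) x /\ ex_derive (fun tau => W x tau) t /\
     Defs.Dt W x t = Defs.Dx (Defs.Dx W) x t) ->
  (forall x t, Qst T s x t -> E x t = Defs.Dx W x t) ->
  (forall x t, Qst_bar_pos T s x t -> ED (Qst_bar_pos T s) E x t) ->
  (forall t, ocI T t -> E 0 t <= 0) ->
  (forall t, clI T t -> 0 <= W (s t) t) ->
  forall x t, Qst_bar T s x t -> 0 <= W x t.
Proof.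
  intros HT Hs Hs0 Hsp HW Hint HE HEc HEn Hb.
  assert (Hlt : forall x t, Qst_bar T s x t -> t < T -> 0 <= W x t).
  { intros x t HQ Htl.
    set (Tm := (t + T) / 2).
    assert (HTm : 0 < Tm /\ Tm < T /\ t <= Tm) by (unfold Tm; destruct HQ; lra).
    assert (Heps : forall eps, 0 < eps -> 0 < W x t + (eps * t + eps * exp (- x))).
    { intros eps He.
      assert (HDxV : forall y t, Qst T s y t ->
        Defs.Dx (fun x t => W x t + (eps * t + eps * exp (- x))) y t = Defs.Dx W y t + - eps * exp (- y)).
      { intros y t0 Hy. unfold Defs.Dx at 1.
        rewrite Derive_plus; [|apply (Hint y t0 Hy)|auto_derive; auto].
        f_equal. apply is_derive_unique. auto_derive; auto. ring. }
      apply (strict_max Tm s (fun x t => W x t + (eps * t + eps * exp (- x)))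
                             (fun x t => E x t + (0 * t + - eps * exp (- x)))); try lra.
      - intros t0 Ht0. apply (ED1_sub (clI T)); [unfold clI; intros; lra|].
        apply cont_ED1. apply Hs. unfold clI in *; lra.
      - intros t0 Ht0. apply Hsp. unfold ocI in *; lra.
      - intros x0 t0 HQ0. apply ED_plus.
        + apply (ED_sub (Qst_bar T s)). { unfold Qst_bar; intros; lra. }
          apply HW. unfold Qst_bar in *; lra.
        + apply ED_psi.
      - intros x0 t0 [Hx0 Ht0].
        assert (HQ0 : Qst T s x0 t0) by (split; lra).
        destruct (Hint x0 t0 HQ0) as [H1 [H2 [H3 H4]]].
        split; [|split; [|split]].
        + apply (ex_derive_plus (fun y => W y t0) (fun y => eps * t0 + eps * exp (- y))); [exact H1|].
          auto_derive; auto.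
        + apply (ex_derive_ext_loc (fun y => Defs.Dx W y t0 + - eps * exp (- y))).
          { apply (filter_imp (fun y => Qst T s y t0)); [|apply Qst_loc; exact HQ0].
            intros y Hy. symmetry; apply HDxV; exact Hy. }
          apply (ex_derive_plus (fun y => Defs.Dx W y t0) (fun y => - eps * exp (- y))); [exact H2|].
          auto_derive; auto.
        + apply (ex_derive_plus (fun tau => W x0 tau) (fun tau => eps * tau + eps * exp (- x0))); [exact H3|].
          auto_derive; auto.
        + assert (E1 : Defs.Dx (Defs.Dx (fun x t => W x t + (eps * t + eps * exp (- x)))) x0 t0
                     = Defs.Dx (Defs.Dx W) x0 t0 + eps * exp (- x0)).
          { unfold Defs.Dx at 1.
            rewrite (Derive_ext_loc _ (fun y => Defs.Dx W y t0 + - eps * exp (- y))).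
            2:{ apply (filter_imp (fun y => Qst T s y t0)); [|apply Qst_loc; exact HQ0].
                intros y Hy. apply HDxV; exact Hy. }
            rewrite Derive_plus; [|exact H2|auto_derive; auto].
            f_equal. apply is_derive_unique. auto_derive; auto. ring. }
          assert (E2 : Defs.Dt (fun x t => W x t + (eps * t + eps * exp (- x))) x0 t0
                     = Defs.Dt W x0 t0 + eps).
          { unfold Defs.Dt at 1. rewrite Derive_plus; [|exact H3|auto_derive; auto].
            f_equal. apply is_derive_unique. auto_derive; auto. ring. }
          rewrite E1, E2, H4.
          assert (exp (- x0) < 1) by (rewrite <- exp_0; apply exp_increasing; lra).
          nra.
      - intros x0 t0 [Hx0 Ht0]. simpl. rewrite HDxV by (split; lra).
        rewrite HE by (split; lra). ring.
      - intros x0 t0 HQ0. apply ED_plus.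
        + apply (ED_sub (Qst_bar_pos T s)). { unfold Qst_bar_pos; intros; lra. }
          apply HEc. unfold Qst_bar_pos in *; lra.
        + apply ED_psi.
      - intros t0 Ht0. simpl. rewrite Ropp_0, exp_0.
        specialize (HEn t0 ltac:(unfold ocI in *; lra)). lra.
      - intros t0 Ht0. simpl. specialize (Hb t0 ltac:(unfold clI in *; lra)).
        pose proof (exp_pos (- s t0)). unfold clI in Ht0. nra.
      - unfold Qst_bar in *; lra. }
    destruct (Rle_or_lt 0 (W x t)) as [ok|bad]; [exact ok|exfalso].
    pose proof (exp_pos (- x)).
    assert (Hp : 0 < t + exp (- x)) by (destruct HQ; lra).
    specialize (Heps (- W x t / (2 * (t + exp (- x))))).
    assert (Hq : 0 < - W x t / (2 * (t + exp (- x)))) by (apply Rdiv_lt_0_compat; lra).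
    specialize (Heps Hq).
    replace (- W x t / (2 * (t + exp (- x))) * t + - W x t / (2 * (t + exp (- x))) * exp (- x))
      with (- W x t / 2) in Heps by (field; lra). lra. }
  intros x t HQ. destruct (Rlt_or_le t T) as [h|h]; [apply Hlt; auto|].
  assert (t = T) by (destruct HQ; lra). subst t.
  apply (closure_lem T s W T x).
  - lra.
  - apply cont_ED1, Hs. unfold clI; lra.
  - exact Hsp.
  - exact Hs0.
  - apply HW; exact HQ.
  - apply HQ.
  - intros x' t' HQ' Ht'. apply Hlt; auto.
Qed.
Lemma slice_int T s U t a b : clI T t -> 0 <= s t -> 0 <= a <= b -> b <= s t ->
  (forall x, 0 <= x <= s t -> ED (Qst_bar T s) U x t) ->
  ex_RInt (fun x => U x t) a b.
Proof.
  intros Ht Hs Ha Hb HU.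
  apply (ex_RInt_ext (fun z => U (clamp (s t) z) t)).
  { intros x Hx. rewrite Rmin_left, Rmax_right in Hx by lra. rewrite clamp_id; [reflexivity|lra]. }
  apply (@ex_RInt_continuous R_CompleteNormedModule). intros z _. apply continuity_pt_filterlim.
  apply (slice_cont T s U t z); [exact Ht|exact Hs|exact HU].
Qed.

Theorem lemma1 (T : R) (h : R -> R) (Usol : (R -> R) -> R -> R -> R) :
  0 < T ->
  (forall t, clI T t -> cont_within (clI T) h t) ->
  (forall t, clI T t -> 0 < h t) ->
  (forall s, boundary_fun T s -> FBNP_sol T s h (Usol s)) ->
  forall s1 s2 : R -> R,
    boundary_fun T s1 -> boundary_fun T s2 ->
    (forall t, clI T t -> s1 t <= s2 t) ->
    forall t, clI T t -> Rop h Usol s2 t <= Rop h Usol s1 t.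
Proof.
  intros HT Hhc Hhp Hsol s1 s2 Hb1 Hb2 Hle t Ht.
  pose proof (Hsol s1 Hb1) as [HUc1 [HUint1 [[Ux1 [HUx11 [HUx12 HUx13]]] [Hheat1 [_ HUb1]]]]].
  pose proof (Hsol s2 Hb2) as [HUc2 [HUint2 [[Ux2 [HUx21 [HUx22 HUx23]]] [Hheat2 [_ HUb2]]]]].
  destruct Hb1 as [Hsc1 [_ [Hs01 Hsp1]]].
  destruct Hb2 as [Hsc2 [_ [Hs02 Hsp2]]].
  set (U1 := Usol s1) in *. set (U2 := Usol s2) in *.
  assert (HA : forall x t, Qst_bar T s2 x t -> 0 <= U2 x t).
  { apply (weak_max T s2 U2 Ux2); auto.
    - intros x t0 HQ. apply cont2_ED; auto.
    - intros x t0 HQ. destruct (HUint2 x t0 HQ) as [e1 [e2 [e3 _]]]. repeat split; auto.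
    - intros x t0 HQ. apply cont2_ED; auto.
    - intros t0 Ht0. specialize (HUx23 t0 Ht0). specialize (Hhp t0 ltac:(unfold ocI, clI in *; lra)). lra.
    - intros t0 Ht0. rewrite HUb2; auto; lra. }
  assert (Hsub : forall x t, Qst T s1 x t -> Qst T s2 x t).
  { intros x t0 [Hx Ht0]. split; [|exact Ht0]. split; [lra|].
    apply Rlt_le_trans with (s1 t0); [lra|]. apply Hle. unfold clI; lra. }
  assert (HDxW : forall y t, Qst T s1 y t -> Defs.Dx (fun x t => U2 x t - U1 x t) y t = Defs.Dx U2 y t - Defs.Dx U1 y t).
  { intros y t0 Hy. unfold Defs.Dx. apply Derive_minus.
    apply (HUint2 y t0 (Hsub _ _ Hy)). apply (HUint1 y t0 Hy). }
  assert (HB : forall x t, Qst_bar T s1 x t -> 0 <= U2 x t - U1 x t).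
  { apply (weak_max T s1 (fun x t => U2 x t - U1 x t) (fun x t => Ux2 x t - Ux1 x t)); auto.
    - intros x t0 HQ. apply ED_minus; [|apply cont2_ED; auto].
      apply (ED_sub (Qst_bar T s2)).
      + intros x' t' [Hx' Ht']. split; [|exact Ht']. split; [lra|].
        apply Rle_trans with (s1 t'); [lra|]. apply Hle. unfold clI; lra.
      + apply cont2_ED. apply HUc2. destruct HQ as [Hx' Ht']. split; [|exact Ht']. split; [lra|].
        apply Rle_trans with (s1 t0); [lra|]. apply Hle. unfold clI; lra.
    - intros x t0 HQ. pose proof (Hsub _ _ HQ) as HQ2.
      destruct (HUint1 x t0 HQ) as [a1 [a2 [a3 _]]].
      destruct (HUint2 x t0 HQ2) as [b1 [b2 [b3 _]]].
      split; [|split; [|split]].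
      + apply (ex_derive_minus (fun y => U2 y t0) (fun y => U1 y t0)); auto.
      + apply (ex_derive_ext_loc (fun y => Defs.Dx U2 y t0 - Defs.Dx U1 y t0)).
        { apply (filter_imp (fun y => Qst T s1 y t0)); [|apply Qst_loc; exact HQ].
          intros y Hy. symmetry; apply HDxW; exact Hy. }
        apply (ex_derive_minus (fun y => Defs.Dx U2 y t0) (fun y => Defs.Dx U1 y t0)); auto.
      + apply (ex_derive_minus (fun tau => U2 x tau) (fun tau => U1 x tau)); auto.
      + unfold Defs.Dt at 1. rewrite Derive_minus by auto.
        transitivity (Defs.Dt U2 x t0 - Defs.Dt U1 x t0); [reflexivity|].
        rewrite (Hheat1 x t0 HQ), (Hheat2 x t0 HQ2).
        symmetry. unfold Defs.Dx at 1.
        rewrite (Derive_ext_loc _ (fun y => Defs.Dx U2 y t0 - Defs.Dx U1 y t0)).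
        2:{ apply (filter_imp (fun y => Qst T s1 y t0)); [|apply Qst_loc; exact HQ].
            intros y Hy. apply HDxW; exact Hy. }
        rewrite Derive_minus by auto. reflexivity.
    - intros x t0 HQ. simpl. rewrite HDxW by auto. rewrite HUx11, HUx21; auto.
    - intros x t0 HQ. apply ED_minus; [|apply cont2_ED; auto].
      apply (ED_sub (Qst_bar_pos T s2)).
      + intros x' t' [Hx' Ht']. split; [|exact Ht']. split; [lra|].
        apply Rle_trans with (s1 t'); [lra|]. apply Hle. unfold clI; lra.
      + apply cont2_ED. apply HUx22. destruct HQ as [Hx' Ht']. split; [|exact Ht']. split; [lra|].
        apply Rle_trans with (s1 t0); [lra|]. apply Hle. unfold clI; lra.
    - intros t0 Ht0. simpl. specialize (HUx13 t0 Ht0). specialize (HUx23 t0 Ht0). lra.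
    - intros t0 Ht0. simpl. rewrite HUb1 by auto.
      assert (0 <= U2 (s1 t0) t0); [|lra]. apply HA.
      pose proof (s_nonneg T s1 t0 Hs01 Hsp1 Ht0). pose proof (Hle t0 Ht0).
      unfold clI in Ht0. split; lra. }
  pose proof (s_nonneg T s1 t Hs01 Hsp1 Ht) as H1.
  pose proof (Hle t Ht) as H12.
  assert (HED1 : forall x, 0 <= x <= s1 t -> ED (Qst_bar T s1) U1 x t).
  { intros x Hx. apply cont2_ED, HUc1. split; [lra|exact Ht]. }
  assert (HED2 : forall x, 0 <= x <= s2 t -> ED (Qst_bar T s2) U2 x t).
  { intros x Hx. apply cont2_ED, HUc2. split; [lra|exact Ht]. }
  unfold Rop. fold U1 U2.
  assert (I1 : ex_RInt (fun x => U1 x t) 0 (s1 t)) by (apply (slice_int T s1); auto; lra).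
  assert (I2a : ex_RInt (fun x => U2 x t) 0 (s1 t)) by (apply (slice_int T s2); auto; lra).
  assert (I2b : ex_RInt (fun x => U2 x t) (s1 t) (s2 t)) by (apply (slice_int T s2); auto; lra).
  rewrite <- (RInt_Chasles (fun x => U2 x t) 0 (s1 t) (s2 t)) by auto.
  assert (L1 : RInt (fun x => U1 x t) 0 (s1 t) <= RInt (fun x => U2 x t) 0 (s1 t)).
  { apply RInt_le; auto. intros x Hx. specialize (HB x t ltac:(split; [lra|exact Ht])). lra. }
  assert (L2 : 0 <= RInt (fun x => U2 x t) (s1 t) (s2 t)).
  { apply RInt_ge_0; auto. intros x Hx. apply HA. split; [lra|exact Ht]. }
  change (plus (RInt (fun x => U2 x t) 0 (s1 t)) (RInt (fun x => U2 x t) (s1 t) (s2 t)))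
    with (RInt (fun x => U2 x t) 0 (s1 t) + RInt (fun x => U2 x t) (s1 t) (s2 t)).
  lra.
Qed.
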